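(* Let $B_3=\langle\sigma_1,\sigma_2\mid\sigma_1\sigma_2\sigma_1=\sigma_2\sigma_1\sigma_2\rangle$, $\Delta=\sigma_1\sigma_2\sigma_1$, and let $<_{DD}$ be the Dubrovina–Dubrovin ordering. Then for every braid $\beta\in B_3$ and every integer $k$, \[\Delta^{-2}<_{DD}\beta^{-1}\sigma_2^k\beta<_{DD}\Delta^2.\]
   Context: A word in $\sigma_1^{\pm1},\sigma_2^{\pm1}$ is 1-positive if $\sigma_1$ occurs in it and only with positive exponents. The Dubrovina–Dubrovin left-ordering $<_{DD}$ of $B_3$ has positive cone consisting of those $\beta\in B_3$ that admit a 1-positive representative word, together with the elements $\sigma_2^k$ for $k<0$. *)

(* Defs.v *)
(* The braid group B_3 is presented by words in the letters
   sigma_1^{+-1}, sigma_2^{+-1}, modulo the congruence generated by free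
   cancellation and the braid relation s1 s2 s1 = s2 s1 s2. *)
From Stdlib Require Import List ZArith.
Import ListNotations.

Inductive gen : Type := s1 | s2.

(* a letter: a generator together with its exponent sign (true = +1, false = -1) *)
Definition letter : Type := (gen * bool)%type.
Definition word : Type := list letter.

Definition inv_letter (x : letter) : letter := (fst x, negb (snd x)).
Definition inv_word (w : word) : word := rev (map inv_letter w).

Inductive braid_eq : word -> word -> Prop :=
| be_refl w : braid_eq w w
| be_sym u v : braid_eq u v -> braid_eq v u
| be_trans u v w : braid_eq u v -> braid_eq v w -> braid_eq u w
| be_cancel u v (x : letter) :
    braid_eq (u ++ x :: inv_letter x :: v) (u ++ v)
| be_braid u v :
    braid_eq (u ++ [(s1,true); (s2,true); (s1,true)] ++ v)
             (u ++ [(s2,true); (s1,true); (s2,true)] ++ v).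

Definition one_positive (w : word) : Prop :=
  In (s1, true) w /\ ~ In (s1, false) w.

Definition sigma2_pow (k : Z) : word :=
  if (0 <=? k)%Z then repeat (s2, true) (Z.to_nat k)
  else repeat (s2, false) (Z.to_nat (- k)).

Definition DD_pos (w : word) : Prop :=
  (exists w', braid_eq w w' /\ one_positive w') \/
  (exists k : Z, (k < 0)%Z /\ braid_eq w (sigma2_pow k)).

Definition DD_lt (a b : word) : Prop := DD_pos (inv_word a ++ b).

Definition Delta : word := [(s1,true); (s2,true); (s1,true)].
Definition Delta2 : word := Delta ++ Delta.
Definition Delta_m2 : word := inv_word Delta2.

(* Main.v *)
Require Import Defs.
From Stdlib Require Import List ZArith Setoid Morphisms Lia.
Import ListNotations.
Import ListNotations.

Notation P1 := (s1,true).
Notation P2 := (s2,true).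
Notation N1 := (s1,false).
Notation N2 := (s2,false).

#[global] Instance be_equiv : Equivalence braid_eq.
Proof. constructor; red; eauto using be_refl, be_sym, be_trans. Qed.

Lemma be_app_l a u v : braid_eq u v -> braid_eq (a ++ u) (a ++ v).
Proof.
  induction 1.
  - reflexivity.
  - symmetry; auto.
  - etransitivity; eauto.
  - rewrite !(app_assoc a u). apply be_cancel.
  - rewrite !(app_assoc a u). apply be_braid.
Qed.

Lemma be_app_r b u v : braid_eq u v -> braid_eq (u ++ b) (v ++ b).
Proof.
  induction 1.
  - reflexivity.
  - symmetry; auto.
  - etransitivity; eauto.
  - rewrite <- !app_assoc. simpl. apply be_cancel.
  - rewrite <- !app_assoc. apply be_braid.
Qed.

#[global] Instance app_proper : Proper (braid_eq ==> braid_eq ==> braid_eq) (@app letter).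
Proof. intros u u' H v v' H'. transitivity (u' ++ v). apply be_app_r; auto. apply be_app_l; auto. Qed.

#[global] Instance cons_proper : Proper (eq ==> braid_eq ==> braid_eq) (@cons letter).
Proof. intros x y -> v v' H. apply (be_app_l [y]); auto. Qed.

Lemma Bf t : braid_eq (P1::P2::P1::t) (P2::P1::P2::t).
Proof. exact (be_braid [] t). Qed.
Lemma Bb t : braid_eq (P2::P1::P2::t) (P1::P2::P1::t).
Proof. symmetry; apply Bf. Qed.
Lemma C1 t : braid_eq (P1::N1::t) t. Proof. exact (be_cancel [] t P1). Qed.
Lemma C1' t : braid_eq (N1::P1::t) t. Proof. exact (be_cancel [] t N1). Qed.
Lemma C2 t : braid_eq (P2::N2::t) t. Proof. exact (be_cancel [] t P2). Qed.
Lemma C2' t : braid_eq (N2::P2::t) t. Proof. exact (be_cancel [] t N2). Qed.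

Lemma inv_word_app u v : inv_word (u ++ v) = inv_word v ++ inv_word u.
Proof. unfold inv_word. rewrite map_app, rev_app_distr. reflexivity. Qed.
Lemma inv_letter_invol x : inv_letter (inv_letter x) = x.
Proof. destruct x as [g b]; unfold inv_letter; simpl; rewrite Bool.negb_involutive; reflexivity. Qed.
Lemma inv_word_invol w : inv_word (inv_word w) = w.
Proof.
  unfold inv_word. rewrite map_rev, rev_involutive, map_map.
  induction w; simpl; auto. rewrite inv_letter_invol, IHw; auto.
Qed.
Lemma inv_word_cons x w : inv_word (x :: w) = inv_word w ++ [inv_letter x].
Proof. reflexivity. Qed.

Lemma cancel_r w : braid_eq (w ++ inv_word w) [].
Proof.
  induction w as [|x w IH]; simpl. reflexivity.
  rewrite inv_word_cons, app_assoc, IH. simpl. exact (be_cancel [] [] x).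
Qed.
Lemma cancel_l w : braid_eq (inv_word w ++ w) [].
Proof. pose proof (cancel_r (inv_word w)) as H. rewrite inv_word_invol in H. exact H. Qed.

Lemma inv_proper u v : braid_eq u v -> braid_eq (inv_word u) (inv_word v).
Proof.
  intro H.
  transitivity (inv_word u ++ (v ++ inv_word v)).
  { rewrite cancel_r, app_nil_r. reflexivity. }
  transitivity (inv_word u ++ (u ++ inv_word v)).
  { apply be_app_l, be_app_r. symmetry; exact H. }
  rewrite app_assoc, cancel_l. reflexivity.
Qed.

#[global] Instance inv_word_proper : Proper (braid_eq ==> braid_eq) inv_word.
Proof. intros u v H; apply inv_proper; exact H. Qed.

Lemma left_cancel u a b : braid_eq (u ++ a) (u ++ b) -> braid_eq a b.
Proof.
  intro H.
  transitivity (inv_word u ++ u ++ a). { rewrite app_assoc, cancel_l. reflexivity. }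
  rewrite H, app_assoc, cancel_l. reflexivity.
Qed.

Lemma D1 : braid_eq (Delta ++ [P1]) ([P2] ++ Delta).
Proof. unfold Delta; simpl. rewrite (Bf [P1]). reflexivity. Qed.
Lemma D2 : braid_eq (Delta ++ [P2]) ([P1] ++ Delta).
Proof. unfold Delta; simpl. rewrite (Bb []). reflexivity. Qed.

Lemma comm_inv a x : braid_eq (a ++ [x]) ([x] ++ a) ->
  braid_eq (a ++ [inv_letter x]) ([inv_letter x] ++ a).
Proof.
  intro H.
  transitivity ([inv_letter x] ++ [x] ++ a ++ [inv_letter x]).
  { rewrite app_assoc. change ([inv_letter x] ++ [x]) with (inv_word [x] ++ [x]).
    rewrite cancel_l. reflexivity. }
  rewrite (app_assoc [x] a), <- H, <- !app_assoc.
  change ([x] ++ [inv_letter x]) with ([x] ++ inv_word [x]). rewrite cancel_r, app_nil_r.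
  reflexivity.
Qed.

Lemma zcomm_letter x : braid_eq (Delta2 ++ [x]) ([x] ++ Delta2).
Proof.
  assert (HP1 : braid_eq (Delta2 ++ [P1]) ([P1] ++ Delta2)).
  { unfold Delta2. rewrite <- app_assoc, D1, app_assoc, D2, <- app_assoc. reflexivity. }
  assert (HP2 : braid_eq (Delta2 ++ [P2]) ([P2] ++ Delta2)).
  { unfold Delta2. rewrite <- app_assoc, D2, app_assoc, D1, <- app_assoc. reflexivity. }
  destruct x as [[|] [|]]; auto.
  - apply (comm_inv _ P1 HP1).
  - apply (comm_inv _ P2 HP2).
Qed.

Lemma zcomm w : braid_eq (Delta2 ++ w) (w ++ Delta2).
Proof.
  induction w as [|x w IH]. rewrite app_nil_r; reflexivity.
  change (x :: w) with ([x] ++ w). rewrite app_assoc, zcomm_letter, <- app_assoc, IH.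
  rewrite app_assoc. reflexivity.
Qed.

Fixpoint zp (n : nat) : word := match n with 0 => [] | S n => Delta2 ++ zp n end.

Lemma zp_comm n w : braid_eq (zp n ++ w) (w ++ zp n).
Proof.
  induction n; cbn [zp]. rewrite app_nil_r; reflexivity.
  rewrite <- app_assoc, IHn, app_assoc, zcomm, <- app_assoc. reflexivity.
Qed.

Lemma zp_comm_r n w t : braid_eq (zp n ++ w ++ t) (w ++ zp n ++ t).
Proof. rewrite app_assoc, zp_comm, <- app_assoc. reflexivity. Qed.

Lemma zp_add a b : zp (a + b) = zp a ++ zp b.
Proof. induction a; cbn [zp plus]; auto. rewrite IHa, app_assoc. auto. Qed.

Inductive L := LX | LY | LY2.
Definition iL (a : L) : word :=
  match a with LX => Delta | LY => [P1;P2] | LY2 => [P1;P2;P1;P2] end.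
Fixpoint interp (c : list L) : word :=
  match c with [] => [] | a :: r => iL a ++ interp r end.

Lemma I3 : braid_eq (Delta2 ++ [P1]) (iL LY2 ++ iL LX).
Proof. unfold Delta2, Delta; simpl. rewrite (Bf [P1]). reflexivity. Qed.
Lemma I4 : braid_eq (Delta2 ++ [P2]) (iL LX ++ iL LY2).
Proof. unfold Delta2, Delta; simpl. reflexivity. Qed.
Lemma I5 : braid_eq (Delta2 ++ [N1]) (iL LX ++ iL LY).
Proof. unfold Delta2, Delta; simpl. rewrite (C1 []). reflexivity. Qed.
Lemma I6 : braid_eq (Delta2 ++ [N2]) (iL LY ++ iL LX).
Proof. unfold Delta2, Delta; simpl. rewrite (Bf [N2]), (C2 []). reflexivity. Qed.
Lemma I7 : braid_eq (iL LY2 ++ iL LY) Delta2.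
Proof. unfold Delta2, Delta; simpl. rewrite (Bb []). reflexivity. Qed.
Lemma I7' : braid_eq (iL LY ++ iL LY2) Delta2.
Proof. exact I7. Qed.
Lemma I8 : braid_eq (iL LY2 ++ iL LY2) (Delta2 ++ iL LY).
Proof. unfold Delta2, Delta; simpl. rewrite (Bb [P1;P2]). reflexivity. Qed.
Lemma I9 : iL LX ++ iL LX = Delta2.
Proof. reflexivity. Qed.
Lemma I10 : iL LY ++ iL LY = iL LY2.
Proof. reflexivity. Qed.

Definition isX a := match a with LX => true | _ => false end.

Definition push (a : L) (c : list L) : nat * list L :=
  match a, c with
  | LX, LX :: r => (1, r)
  | LY, LY :: r => (0, LY2 :: r)
  | LY, LY2 :: r => (1, r)
  | LY2, LY :: r => (1, r)
  | LY2, LY2 :: r => (1, LY :: r)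
  | _, _ => (0, a :: c)
  end.

Lemma push_ok a c : braid_eq (iL a ++ interp c) (zp (fst (push a c)) ++ interp (snd (push a c))).
Proof.
  destruct a; destruct c as [|b r]; try destruct b; cbn [push fst snd interp zp];
    rewrite ?app_nil_r; try reflexivity.
  - rewrite app_assoc, I7'. reflexivity.
  - rewrite app_assoc, I7. reflexivity.
  - rewrite app_assoc, I8, app_assoc. reflexivity.
Qed.

Fixpoint alt (c : list L) : Prop :=
  match c with
  | a :: ((b :: _) as r) => isX a <> isX b /\ alt r
  | _ => True
  end.

Lemma push_alt a c : alt c -> alt (snd (push a c)).
Proof.
  destruct a; destruct c as [|b r]; try destruct b; cbn [push fst snd]; simpl; auto;
   try (destruct r as [|d r]; simpl; intuition; fail);
   try (intros; split; [discriminate| auto]).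
  all: destruct r as [|d r]; simpl; intuition; destruct d; simpl in *; intuition.
Qed.

Definition pairOf (x : letter) : L * L :=
  match x with
  | (s1,true) => (LY2, LX)
  | (s2,true) => (LX, LY2)
  | (s1,false) => (LX, LY)
  | (s2,false) => (LY, LX)
  end.

Lemma pairOf_ok x : braid_eq (Delta2 ++ [x]) (iL (fst (pairOf x)) ++ iL (snd (pairOf x))).
Proof. destruct x as [[|] [|]]; simpl; [exact I3|exact I5|exact I4|exact I6]. Qed.

Lemma decomp beta : exists a b c, alt c /\ braid_eq (zp a ++ beta) (zp b ++ interp c).
Proof.
  induction beta as [|x beta IH].
  - exists 0, 0, []. split; simpl; [exact I|reflexivity].
  - destruct IH as (a & b & c & Hc & H).
    destruct (pairOf x) as [p1 p2] eqn:Ex.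
    pose proof (pairOf_ok x) as Hx. rewrite Ex in Hx; cbn [fst snd] in Hx.
    destruct (push p2 c) as [j2 c2] eqn:E2.
    destruct (push p1 c2) as [j1 c1] eqn:E1.
    pose proof (push_ok p2 c) as H2. rewrite E2 in H2; simpl in H2.
    pose proof (push_ok p1 c2) as H1. rewrite E1 in H1; simpl in H1.
    exists (S a), (b + j2 + j1), c1. split.
    + pose proof (push_alt p2 c Hc) as A2. rewrite E2 in A2. simpl in A2.
      pose proof (push_alt p1 c2 A2) as A1. rewrite E1 in A1. exact A1.
    + cbn [zp]. change (x :: beta) with ([x] ++ beta).
      rewrite !zp_add, <- !app_assoc.
      rewrite (zp_comm_r a [x]), (app_assoc Delta2 [x]), Hx, H, <- !app_assoc.
      rewrite <- (zp_comm_r b (iL p2)), <- (zp_comm_r b (iL p1)), H2, <- (zp_comm_r j2 (iL p1)), H1.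
      reflexivity.
Qed.

Fixpoint gpg (c : list L) : nat :=
  match c with
  | LY :: LX :: r => S (gpg r)
  | LY2 :: LX :: r => S (gpg r)
  | _ :: r => gpg r
  | [] => 0 end.
Fixpoint gps (c : list L) : nat :=
  match c with
  | LY :: LX :: r => gps r
  | LY2 :: LX :: r => gps r
  | _ :: r => S (gps r)
  | [] => 0 end.
Fixpoint gpq (c : list L) : word :=
  match c with
  | LY :: LX :: r => N2 :: gpq r
  | LY2 :: LX :: r => P1 :: gpq r
  | a :: r => iL a ++ gpq r
  | [] => [] end.

Definition bar a := match a with LX => LX | LY => LY2 | LY2 => LY end.

Fixpoint gbg (c : list L) : nat :=
  match c with
  | LX :: LY :: r => S (gbg r)
  | LX :: LY2 :: r => S (gbg r)
  | _ :: r => gbg r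
  | [] => 0 end.
Fixpoint gbs (c : list L) : nat :=
  match c with
  | LX :: LY :: r => gbs r
  | LX :: LY2 :: r => gbs r
  | _ :: r => S (gbs r)
  | [] => 0 end.
Fixpoint gbq (c : list L) : word :=
  match c with
  | LX :: LY :: r => gbq r ++ [P1]
  | LX :: LY2 :: r => gbq r ++ [N2]
  | a :: r => gbq r ++ iL (bar a)
  | [] => [] end.

Lemma dz_r w t : braid_eq (Delta2 ++ w ++ t) (w ++ Delta2 ++ t).
Proof. rewrite app_assoc, zcomm, <- app_assoc. reflexivity. Qed.

Lemma gp_ok : forall c, braid_eq (interp c) (zp (gpg c) ++ gpq c).
Proof.
  fix IH 1. intros [|a t]. reflexivity.
  pose proof (IH t) as Ht.
  assert (single : braid_eq (interp (a :: t)) (zp (gpg t) ++ iL a ++ gpq t)).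
  { cbn [interp]. rewrite Ht, <- zp_comm_r. reflexivity. }
  destruct t as [|b r]. { destruct a; exact single. }
  pose proof (IH r) as Hr.
  destruct a, b; try exact single; cbn [gpg gpq interp zp].
  - rewrite Hr, app_assoc, <- I6, <- app_assoc.
    rewrite <- (app_assoc Delta2 (zp _)). apply be_app_l. symmetry; exact (zp_comm_r _ [N2] _).
  - rewrite Hr, app_assoc, <- I3, <- app_assoc.
    rewrite <- (app_assoc Delta2 (zp _)). apply be_app_l. symmetry; exact (zp_comm_r _ [P1] _).
Qed.

Lemma single_inv a : braid_eq (Delta2 ++ inv_word (iL a)) (iL (bar a)).
Proof.
  assert (H : braid_eq (iL (bar a) ++ iL a) Delta2).
  { destruct a; simpl. reflexivity. exact I7'. exact I7. }
  rewrite <- H, <- app_assoc, cancel_r, app_nil_r. reflexivity.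
Qed.

Lemma pair_inv P q : braid_eq P (Delta2 ++ q) ->
  braid_eq (Delta2 ++ Delta2 ++ inv_word P) (Delta2 ++ inv_word q).
Proof.
  intro H. rewrite H, inv_word_app, (dz_r (inv_word q)), cancel_r, app_nil_r. reflexivity.
Qed.

Lemma gb_ok : forall c, braid_eq (zp (length c) ++ inv_word (interp c)) (zp (gbg c) ++ gbq c).
Proof.
  fix IH 1. intros [|a t]. reflexivity.
  pose proof (IH t) as Ht.
  assert (single : braid_eq (zp (length (a :: t)) ++ inv_word (interp (a :: t)))
                            (zp (gbg t) ++ gbq t ++ iL (bar a))).
  { cbn [interp length zp]. rewrite inv_word_app, <- !app_assoc.
    rewrite (app_assoc (zp (length t))), dz_r, single_inv, app_assoc, Ht, <- app_assoc.
    reflexivity. }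
  destruct t as [|b r]. { destruct a; exact single. }
  pose proof (IH r) as Hr.
  destruct a, b; try exact single; cbn [gbg gbq interp zp length].
  - rewrite (inv_word_app (iL LX)), (inv_word_app (iL LY)), <- !app_assoc.
    rewrite (app_assoc (zp (length r))), (dz_r (zp (length r) ++ inv_word (interp r))).
    rewrite (dz_r (zp (length r) ++ inv_word (interp r))), <- (inv_word_app (iL LX) (iL LY)).
    rewrite (pair_inv (iL LX ++ iL LY) [N1]). 2:{ symmetry; exact I5. }
    rewrite Hr, <- !app_assoc, (app_assoc (zp (gbg r))), <- (dz_r (zp (gbg r) ++ gbq r)), <- !app_assoc.
    reflexivity.
  - rewrite (inv_word_app (iL LX)), (inv_word_app (iL LY2)), <- !app_assoc.
    rewrite (app_assoc (zp (length r))), (dz_r (zp (length r) ++ inv_word (interp r))).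
    rewrite (dz_r (zp (length r) ++ inv_word (interp r))), <- (inv_word_app (iL LX) (iL LY2)).
    rewrite (pair_inv (iL LX ++ iL LY2) [P2]). 2:{ symmetry; exact I4. }
    rewrite Hr, <- !app_assoc, (app_assoc (zp (gbg r))), <- (dz_r (zp (gbg r) ++ gbq r)), <- !app_assoc.
    reflexivity.
Qed.

Lemma iL_noN1 a : ~ In N1 (iL a).
Proof. destruct a; simpl; intuition (try discriminate). Qed.
Lemma iL_P1 a : In P1 (iL a).
Proof. destruct a; simpl; auto. Qed.

Lemma gp_len : forall c, length c = 2 * gpg c + gps c.
Proof.
  fix IH 1. intros [|a t]. reflexivity.
  pose proof (IH t) as Ht. destruct t as [|b r]. { destruct a; reflexivity. }
  pose proof (IH r) as Hr.
  destruct a, b; cbn [gpg gps length] in *; lia.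
Qed.
Lemma gb_len : forall c, length c = 2 * gbg c + gbs c.
Proof.
  fix IH 1. intros [|a t]. reflexivity.
  pose proof (IH t) as Ht. destruct t as [|b r]. { destruct a; reflexivity. }
  pose proof (IH r) as Hr.
  destruct a, b; cbn [gbg gbs length] in *; lia.
Qed.

Lemma gpq_ok : forall c, ~ In N1 (gpq c) /\ (1 <= gps c -> In P1 (gpq c)).
Proof.
  fix IH 1. intros [|a t]. simpl; split; [tauto|lia].
  pose proof (IH t) as [Ht1 Ht2].
  assert (single : ~ In N1 (iL a ++ gpq t) /\ (1 <= S (gps t) -> In P1 (iL a ++ gpq t))).
  { split. rewrite in_app_iff. pose proof (iL_noN1 a). tauto.
    intros _. apply in_app_iff. left. apply iL_P1. }
  destruct t as [|b r]. { destruct a; exact single. }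
  pose proof (IH r) as [Hr1 Hr2].
  destruct a, b; try exact single; cbn [gpq gps]; split; simpl; intuition (try discriminate).
Qed.

Lemma gbq_ok : forall c, ~ In N1 (gbq c) /\ (1 <= gbs c -> In P1 (gbq c)).
Proof.
  fix IH 1. intros [|a t]. simpl; split; [tauto|lia].
  pose proof (IH t) as [Ht1 Ht2].
  assert (single : ~ In N1 (gbq t ++ iL (bar a)) /\ (1 <= S (gbs t) -> In P1 (gbq t ++ iL (bar a)))).
  { split. rewrite in_app_iff. pose proof (iL_noN1 (bar a)). tauto.
    intros _. apply in_app_iff. right. apply iL_P1. }
  destruct t as [|b r]. { destruct a; exact single. }
  pose proof (IH r) as [Hr1 Hr2].
  destruct a, b; try exact single; cbn [gbq gbs]; split; rewrite ?in_app_iff; simpl; intuition (try discriminate).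
Qed.

Lemma last_def (b : L) r d d' : last (b :: r) d = last (b :: r) d'.
Proof. revert b; induction r as [|c r IH]; intros b. reflexivity.
  change (last (b :: c :: r) d) with (last (c :: r) d).
  change (last (b :: c :: r) d') with (last (c :: r) d'). apply IH. Qed.

Definition ind (b : bool) : nat := if b then 1 else 0.

Lemma gps_formula : forall t a, alt (a :: t) ->
  gps (a :: t) = ind (isX a) + ind (negb (isX (last (a :: t) a))).
Proof.
  fix IH 1. intros [|b r] a H. { destruct a; reflexivity. }
  destruct H as [Hab Hr].
  pose proof (IH r b Hr) as Hb.
  assert (Hl : last (a :: b :: r) a = last (b :: r) b).
  { change (last (a :: b :: r) a) with (last (b :: r) a). apply last_def. }
  rewrite Hl.
  destruct a, b; simpl in Hab; try congruence.
  - change (gps (LX :: LY :: r)) with (S (gps (LY :: r))). rewrite Hb. reflexivity.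
  - change (gps (LX :: LY2 :: r)) with (S (gps (LY2 :: r))). rewrite Hb. reflexivity.
  - destruct r as [|c r]. { reflexivity. }
    destruct Hr as [Hbc Hr']. change (gps (LY :: LX :: c :: r)) with (gps (c :: r)). rewrite (IH r c Hr').
    assert (Hl2 : last (LX :: c :: r) LX = last (c :: r) c).
    { change (last (LX :: c :: r) LX) with (last (c :: r) LX). apply last_def. }
    rewrite Hl2. destruct c; simpl in Hbc; try congruence; reflexivity.
  - destruct r as [|c r]. { reflexivity. }
    destruct Hr as [Hbc Hr']. change (gps (LY2 :: LX :: c :: r)) with (gps (c :: r)). rewrite (IH r c Hr').
    assert (Hl2 : last (LX :: c :: r) LX = last (c :: r) c).
    { change (last (LX :: c :: r) LX) with (last (c :: r) LX). apply last_def. }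
    rewrite Hl2. destruct c; simpl in Hbc; try congruence; reflexivity.
Qed.

Lemma gbs_formula : forall t a, alt (a :: t) ->
  gbs (a :: t) = ind (negb (isX a)) + ind (isX (last (a :: t) a)).
Proof.
  fix IH 1. intros [|b r] a H. { destruct a; reflexivity. }
  destruct H as [Hab Hr].
  pose proof (IH r b Hr) as Hb.
  assert (Hl : last (a :: b :: r) a = last (b :: r) b).
  { change (last (a :: b :: r) a) with (last (b :: r) a). apply last_def. }
  rewrite Hl.
  destruct a, b; simpl in Hab; try congruence.
  - destruct r as [|c r]. { reflexivity. }
    destruct Hr as [Hbc Hr']. change (gbs (LX :: LY :: c :: r)) with (gbs (c :: r)).
    rewrite (IH r c Hr').
    assert (Hl2 : last (LY :: c :: r) LY = last (c :: r) c).
    { change (last (LY :: c :: r) LY) with (last (c :: r) LY). apply last_def. }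
    rewrite Hl2. destruct c; simpl in Hbc; try congruence; reflexivity.
  - destruct r as [|c r]. { reflexivity. }
    destruct Hr as [Hbc Hr']. change (gbs (LX :: LY2 :: c :: r)) with (gbs (c :: r)).
    rewrite (IH r c Hr').
    assert (Hl2 : last (LY2 :: c :: r) LY2 = last (c :: r) c).
    { change (last (LY2 :: c :: r) LY2) with (last (c :: r) LY2). apply last_def. }
    rewrite Hl2. destruct c; simpl in Hbc; try congruence; reflexivity.
  - change (gbs (LY :: LX :: r)) with (S (gbs (LX :: r))). rewrite Hb. reflexivity.
  - change (gbs (LY2 :: LX :: r)) with (S (gbs (LX :: r))). rewrite Hb. reflexivity.
Qed.

Lemma sum2 c : alt c -> c <> [] -> gps c + gbs c = 2.
Proof.
  intros H Hn. destruct c as [|a t]; [congruence|].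
  rewrite (gps_formula t a H), (gbs_formula t a H).
  destruct (isX a), (isX (last (a :: t) a)); reflexivity.
Qed.

Lemma conjZ n u v : braid_eq (inv_word (zp n ++ u) ++ v ++ zp n ++ u) (inv_word u ++ v ++ u).
Proof.
  rewrite inv_word_app, <- !app_assoc, (app_assoc v), <- (zp_comm n v), <- !app_assoc.
  rewrite (app_assoc (inv_word (zp n))), cancel_l. reflexivity.
Qed.

Lemma main beta v : (forall l, In l v -> fst l = s2) ->
  exists w', braid_eq (Delta2 ++ inv_word beta ++ v ++ beta) w' /\ one_positive w'.
Proof.
  intros Hv.
  assert (HvN : ~ In N1 v). { intro H. apply Hv in H. discriminate. }
  destruct (decomp beta) as (a & b & c & Hc & H).
  assert (HA : braid_eq (inv_word beta ++ v ++ beta) (inv_word (interp c) ++ v ++ interp c)).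
  { rewrite <- (conjZ a beta v), H, conjZ. reflexivity. }
  enough (Hen : exists w', braid_eq (Delta2 ++ inv_word (interp c) ++ v ++ interp c) w' /\ one_positive w').
  { destruct Hen as (w & Hw & Pw). exists w; split; [rewrite HA; exact Hw | exact Pw]. }
  destruct c as [|a0 t].
  - exists (Delta2 ++ v). split. simpl. rewrite app_nil_r. reflexivity.
    split. unfold Delta2, Delta; simpl; auto.
    rewrite in_app_iff. unfold Delta2, Delta; simpl. intuition (try discriminate).
  - set (c := a0 :: t) in *.
    assert (Hs := sum2 c Hc ltac:(discriminate)).
    assert (L1 := gp_len c). assert (L2 := gb_len c).
    assert (En : length c = S (gbg c + gpg c)) by lia.
    exists (gbq c ++ v ++ gpq c). split.
    + apply (left_cancel (zp (length c))).
      rewrite (zp_comm_r (length c) Delta2).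
      rewrite (app_assoc (zp (length c)) (inv_word (interp c))), gb_ok, gp_ok.
      rewrite En. cbn [zp]. rewrite zp_add, <- !app_assoc.
      apply be_app_l. apply be_app_l.
      rewrite <- (zp_comm_r (gpg c) v), <- (zp_comm_r (gpg c) (gbq c)). reflexivity.
    + destruct (gpq_ok c) as [Q1 Q2]. destruct (gbq_ok c) as [B1 B2].
      split.
      * rewrite !in_app_iff. destruct (gps c) as [|s] eqn:Es.
        -- left. apply B2. lia.
        -- right; right. apply Q2. lia.
      * rewrite !in_app_iff. tauto.
Qed.

Lemma sig_s2 k : forall l, In l (sigma2_pow k) -> fst l = s2.
Proof.
  unfold sigma2_pow; destruct (0 <=? k)%Z; intros l Hl; apply repeat_spec in Hl; subst; reflexivity.
Qed.

Lemma inv_s2 v : (forall l, In l v -> fst l = s2) -> forall l, In l (inv_word v) -> fst l = s2.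
Proof.
  intros H l Hl. unfold inv_word in Hl. rewrite <- in_rev, in_map_iff in Hl.
  destruct Hl as (x & <- & Hx). apply H in Hx. destruct x; simpl in *; auto.
Qed.

Theorem lemma28 : forall (beta : word) (k : Z),
  DD_lt Delta_m2 (inv_word beta ++ sigma2_pow k ++ beta) /\
  DD_lt (inv_word beta ++ sigma2_pow k ++ beta) Delta2.
Proof.
  intros beta k. unfold DD_lt, DD_pos. split; left.
  - unfold Delta_m2. rewrite inv_word_invol. apply main, sig_s2.
  - rewrite !inv_word_app, inv_word_invol, <- !app_assoc.
    destruct (main beta (inv_word (sigma2_pow k)) (inv_s2 _ (sig_s2 k))) as (w & Hw & Pw).
    exists w. split; auto. rewrite <- Hw, zcomm, <- !app_assoc. reflexivity.
Qed.
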